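(* Let $r=2$ and $m=2n$. Let the utilities $u_i(j)$ ($i\in[n]$, $j\in[m]$) be drawn independently from a distribution $\mathcal{U}$ on $[0,1]$ that is $(\underline{\theta},q)$-polynomially bounded below at 1 and $(\overline{\theta},q)$-polynomially bounded above at 1, for constants $\underline{\theta},\overline{\theta},q>0$, and let $\tau:=1-\left(\frac{64\log m}{\underline{\theta}n}\right)^{1/q}$. Let $E_{\geq\tau}=\{(i,j): u_i(j)\geq\tau\}$ and let $E^*_{\geq\tau}$ be the edge set produced by ThresholdMatchingWithRemoval$_\tau$ (see context). Then, with high probability, the bipartite graph $(N,M,E_{\geq\tau}\setminus E^*_{\geq\tau})$ has maximum degree at most 2.
   Context: Agents are $N=[n]$, items $M=[m]$. A distribution $\mathcal{U}$ on $[0,1]$ is $(\theta,q)$-polynomially bounded below (resp. above) at 1 if for all $\alpha\in(0,1]$, $\Pr_{u\sim\mathcal{U}}[u>1-\alpha]\geq\theta\alpha^q$ (resp. $\leq\theta\alpha^q$). For a finite multiset $S$ of reals, sum-top$_r(S)$ is the sum of its $r$ largest elements (or of all elements if $|S|<r$). Procedure ThresholdMatchingWithRemoval$_\tau$: for each agent $i=1,\dots,n$, set $M^*_{\geq\tau}(i)\leftarrow\{j\in M: u_i(j)\geq\tau\}$; then for each $i'\in N\setminus\{i\}$ in turn, while sum-top$_r(\{u_{i'}(j): j\in M^*_{\geq\tau}(i)\})>r\tau$ (as a multiset), remove from $M^*_{\geq\tau}(i)$ the item(s) $j\in M^*_{\geq\tau}(i)$ maximizing $u_{i'}(j)$. Then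 $E^*_{\geq\tau}=\{(i,j): j\in M^*_{\geq\tau}(i)\text{ at the end}\}$. $\log$ is natural. ''With high probability'' means with probability tending to 1 as $n\to\infty$. *)

(* Defs.v *)
From HB Require Import structures.
From mathcomp Require Import all_boot all_order all_algebra.
From mathcomp Require Import all_classical all_reals all_analysis.
Set Implicit Arguments. Unset Strict Implicit. Unset Printing Implicit Defensive.
Import Order.TTheory GRing.Theory Num.Theory.
Local Open Scope classical_set_scope.
Local Open Scope ring_scope.

Definition poly_bounded_below (R : realType) (U : probability R R) (theta q : R) :=
  forall alpha : R, 0 < alpha <= 1 ->
    ((theta * alpha `^ q)%:E <= U [set u : R | (1 - alpha < u)%R])%E.

Definition poly_bounded_above (R : realType) (U : probability R R) (theta q : R) :=
  forall alpha : R, 0 < alpha <= 1 ->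
    (U [set u : R | (1 - alpha < u)%R] <= (theta * alpha `^ q)%:E)%E.

(* mutual independence of a finite family X of real random variables indexed
   by I : finType: product rule for every choice of measurable sets
   (taking B k = setT gives the product rule for every subfamily). *)
Definition mutually_independent d (Omega : measurableType d) (R : realType)
  (P : probability Omega R) (I : finType) (X : I -> {RV P >-> R}) :=
  forall B : I -> set R, (forall k, measurable (B k)) ->
    P (\bigcap_(k in [set: I]) (X k @^-1` B k)) =
    (\prod_(k : I) P (X k @^-1` B k))%E.

Definition sum_top (R : realType) (r : nat) (s : seq R) : R :=
  \sum_(x <- take r (sort (fun a b : R => b <= a) s)) x.

Section Procedure.
Variables (R : realType) (n m r : nat) (tau : R) (u : 'I_n -> 'I_m -> R).

Definition argmax_items (i' : 'I_n) (S : {set 'I_m}) : {set 'I_m} :=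
  finset (fun j => (j \in S) && [forall k in S, u i' k <= u i' j]).

Definition removal_step (i' : 'I_n) (S : {set 'I_m}) : {set 'I_m} :=
  if r%:R * tau < sum_top r [seq u i' j | j <- enum S]
  then S :\: argmax_items i' S else S.

(* the while loop; each effective iteration removes at least one item,
   so m iterations suffice to reach the fixed point *)
Definition removal_loop (i' : 'I_n) (S : {set 'I_m}) : {set 'I_m} :=
  iter m (removal_step i') S.

Definition Mstar (i : 'I_n) : {set 'I_m} :=
  foldl (fun S i' => removal_loop i' S)
        (finset (fun j : 'I_m => tau <= u i j))
        [seq i' <- enum 'I_n | i' != i].

Definition E_ge (i : 'I_n) (j : 'I_m) : bool := tau <= u i j.
Definition E_star (i : 'I_n) (j : 'I_m) : bool := j \in Mstar i.

Definition residual_max_degree_le (k : nat) : bool :=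
  [forall i : 'I_n, #|[pred j : 'I_m | E_ge i j && ~~ E_star i j]| <= k]%N &&
  [forall j : 'I_m, #|[pred i : 'I_n | E_ge i j && ~~ E_star i j]| <= k]%N.

End Procedure.

Definition tau_threshold (R : realType) (theta q : R) (n m : nat) : R :=
  1 - (64 * ln (m%:R : R) / (theta * n%:R)) `^ (q^-1).

(* Main.v *)
Require Import Defs.
From HB Require Import structures.
From mathcomp Require Import all_boot all_order all_algebra.
From mathcomp Require Import all_classical all_reals all_analysis.
From mathcomp Require Import lra ring.
Import Order.TTheory GRing.Theory Num.Theory.
Set Implicit Arguments. Unset Strict Implicit. Unset Printing Implicit Defensive.

Ltac neq_solve := rewrite /= ?inE ?negb_or /=; repeat (apply/andP; split);
  try done; rewrite eq_sym; done.

Section Comb.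
Variables (A B : finType).

Definition pat_holds (T : finType) (ok : pred T) (cells : T -> seq (A * B))
  (h : A -> B -> bool) := [exists t, ok t && all (fun c => h c.1 c.2) (cells t)].

Definition okF (t : A * A * B * B * B) := let: (i, a, x, y, z) := t in
  (i != a) && uniq [:: x; y; z].
Definition cellsF (t : A * A * B * B * B) := let: (i, a, x, y, z) := t in
  [:: (i, x); (i, y); (i, z); (a, x); (a, y); (a, z)].
Definition okG1 (t : A * A * A * B * B) := let: (i, a, b, x, y) := t in
  uniq [:: i; a; b] && (x != y).
Definition cellsG1 (t : A * A * A * B * B) := let: (i, a, b, x, y) := t in
  [:: (i, x); (i, y); (a, x); (a, y); (b, x); (b, y)].
Definition okG2 (t : A * A * A * B * B * B) := let: (i, a, b, x, y, z) := t in
  uniq [:: i; a; b] && uniq [:: x; y; z].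
Definition cellsG2 (t : A * A * A * B * B * B) := let: (i, a, b, x, y, z) := t in
  [:: (i, x); (i, y); (i, z); (a, x); (a, y); (b, x); (b, z)].
Definition okG3 (t : A * A * A * B * B * B * B) := let: (i, a, b, x, y, z, w) := t in
  uniq [:: i; a; b] && uniq [:: x; y; z; w].
Definition cellsG3 (t : A * A * A * B * B * B * B) := let: (i, a, b, x, y, z, w) := t in
  [:: (i, x); (i, y); (i, z); (i, w); (a, x); (a, y); (b, z); (b, w)].

Definition no_bad (h : A -> B -> bool) :=
  ~~ pat_holds okF cellsF h && ~~ pat_holds okG1 cellsG1 h &&
  ~~ pat_holds okG2 cellsG2 h && ~~ pat_holds okG3 cellsG3 h.

Lemma three_elems (D : pred B) : (2 < #|D|)%N ->
  exists j1 j2 j3, [/\ D j1, D j2, D j3 & uniq [:: j1; j2; j3]].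
Proof.
rewrite cardE; have := enum_uniq D; have : forall j, j \in enum D -> D j.
  by move=> j; rewrite mem_enum.
case: (enum D) => [|j1 [|j2 [|j3 s]]] //= H /and3P[u1 u2 /andP[u3 _]] _.
exists j1, j2, j3; split.
- by apply: H; rewrite inE eqxx.
- by apply: H; rewrite !inE eqxx orbT.
- by apply: H; rewrite !inE eqxx !orbT.
- rewrite /= !inE; move: u1 u2; rewrite !inE !negb_or => /andP[-> /andP[-> _]] /andP[-> _].
  done.
Qed.

Lemma G_cover (h : A -> B -> bool) i a b x1 y1 x2 y2 :
  uniq [:: i; a; b] -> x1 != y1 -> x2 != y2 ->
  h i x1 -> h a x1 -> h i y1 -> h a y1 -> h i x2 -> h b x2 -> h i y2 -> h b y2 ->
  [|| pat_holds okG1 cellsG1 h, pat_holds okG2 cellsG2 h | pat_holds okG3 cellsG3 h].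
Proof.
move=> uiab n1 n2 hix1 hax1 hiy1 hay1 hix2 hbx2 hiy2 hby2.
have G2 x y z : uniq [:: x; y; z] -> h i x -> h i y -> h i z -> h a x -> h a y ->
    h b x -> h b z -> pat_holds okG2 cellsG2 h.
  move=> uxyz hx hy hz hax hay hbx hbz; apply/existsP; exists (i, a, b, x, y, z).
  by move: uiab uxyz; rewrite /okG2 /cellsG2 /= => -> -> /=; rewrite hx hy hz hax hay hbx hbz.
case: (eqVneq x2 x1) => [e1|d1]; case: (eqVneq x2 y1) => [e2|d2];
  case: (eqVneq y2 x1) => [e3|d3]; case: (eqVneq y2 y1) => [e4|d4].
all: try (subst; rewrite ?eqxx in n1 n2; by []).
all: subst.
- apply/orP; left; apply/existsP; exists (i, a, b, x1, y1).
  by move: uiab; rewrite /okG1 /cellsG1 /= => -> /=; rewrite n1 hix1 hiy1 hax1 hay1 hbx2 hby2.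
- apply/orP; right; apply/orP; left; apply: (G2 x1 y1 y2) => //.
  by neq_solve.
- apply/orP; left; apply/existsP; exists (i, a, b, y1, x1).
  by move: uiab; rewrite /okG1 /cellsG1 /= => -> /=; rewrite eq_sym n1 hix1 hiy1 hax1 hay1 hbx2 hby2.
- apply/orP; right; apply/orP; left; apply: (G2 y1 x1 y2) => //.
  by neq_solve.
- apply/orP; right; apply/orP; left; apply: (G2 x1 y1 x2) => //.
  by neq_solve.
- apply/orP; right; apply/orP; left; apply: (G2 y1 x1 x2) => //.
  by neq_solve.
- apply/orP; right; apply/orP; right; apply/existsP; exists (i, a, b, x1, y1, x2, y2).
  move: uiab; rewrite /okG3 /cellsG3 /= => -> /=; rewrite !inE !negb_or n1 n2 !(eq_sym x1) !(eq_sym y1) d1 d2 d3 d4 /=.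
  by rewrite hix1 hiy1 hix2 hiy2 hax1 hay1 hbx2 hby2.
Qed.

Lemma comb (h : A -> B -> bool) : no_bad h -> forall i (D : pred B),
  (forall j, D j -> exists a y, [&& a != i, y != j, h i j, h a j, h a y & h i y]) ->
  (#|D| <= 2)%N.
Proof.
case/andP=> /andP[/andP[nF nG1] nG2] nG3 i D W.
rewrite leqNgt; apply/negP => /three_elems [j1 [j2 [j3 [D1 D2 D3 u123]]]].
have [a1 [y1 /and5P[ai1 yj1 hij1 haj1 /andP[hay1 hiy1]]]] := W _ D1.
have [a2 [y2 /and5P[ai2 yj2 hij2 haj2 /andP[hay2 hiy2]]]] := W _ D2.
have [a3 [y3 /and5P[ai3 yj3 hij3 haj3 /andP[hay3 hiy3]]]] := W _ D3.
have same a b x1 z1 x2 z2 : a != i -> b != i -> x1 != z1 -> x2 != z2 ->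
  h i x1 -> h a x1 -> h i z1 -> h a z1 -> h i x2 -> h b x2 -> h i z2 -> h b z2 ->
  a = b.
  move=> ai bi n1 n2 ? ? ? ? ? ? ? ?; case: (eqVneq a b) => // ab.
  have : [|| pat_holds okG1 cellsG1 h, pat_holds okG2 cellsG2 h | pat_holds okG3 cellsG3 h].
    by apply: (@G_cover h i a b x1 z1 x2 z2) => //; neq_solve.
  by rewrite (negbTE nG1) (negbTE nG2) (negbTE nG3).
have e12 : a1 = a2 by apply: (same _ _ j1 y1 j2 y2); rewrite // eq_sym.
have e13 : a1 = a3 by apply: (same _ _ j1 y1 j3 y3); rewrite // eq_sym.
subst a2 a3.
move/negP: nF; apply; apply/existsP; exists (i, a1, j1, j2, j3).
move: u123; rewrite /okF /cellsF /= => -> /=.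
by rewrite eq_sym ai1 hij1 hij2 hij3 haj1 haj2 haj3.
Qed.

End Comb.

Section Comb2.
Variables (A B : finType).
Ltac destr := repeat match goal with H : is_true (_ && _) |- _ => case/andP: H => ? ? end.

Ltac cell_solve := rewrite /= ?inE ?negb_or /=; repeat (apply/andP; split);
  rewrite ?xpair_eqE ?eqxx ?andbT ?andTb //;
  try (by rewrite eq_sym);
  try (rewrite negb_and; apply/orP;
       first [by left | by right | by left; rewrite eq_sym | by right; rewrite eq_sym]).

Lemma okF_uniq (t : A * A * B * B * B) : okF t -> uniq (cellsF t) /\ size (cellsF t) = 6%N.
Proof.
case: t => [[[[i a] x] y] z]; rewrite /okF /cellsF /= !inE !negb_or => /andP[ia /andP[/andP[xy xz] /andP[yz _]]].
split => //. cell_solve.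
Qed.

Lemma okG1_uniq (t : A * A * A * B * B) : okG1 t -> uniq (cellsG1 t) /\ size (cellsG1 t) = 6%N.
Proof.
case: t => [[[[i a] b] x] y]; rewrite /okG1 /cellsG1 /= !inE !negb_or.
move=> H; split => //; destr; cell_solve.
Qed.

Lemma okG2_uniq (t : A * A * A * B * B * B) : okG2 t -> uniq (cellsG2 t) /\ size (cellsG2 t) = 7%N.
Proof.
case: t => [[[[[i a] b] x] y] z]; rewrite /okG2 /cellsG2 /= !inE !negb_or.
move=> H; split => //; destr; cell_solve.
Qed.

Lemma okG3_uniq (t : A * A * A * B * B * B * B) : okG3 t -> uniq (cellsG3 t) /\ size (cellsG3 t) = 8%N.
Proof.
case: t => [[[[[[i a] b] x] y] z] w]; rewrite /okG3 /cellsG3 /= !inE !negb_or.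
move=> H; split => //; destr; cell_solve.
Qed.

End Comb2.

Definition swapc (A B : Type) (c : A * B) := (c.2, c.1).

Lemma swapc_inj (A B : Type) : injective (@swapc A B).
Proof. by case=> a b [a' b'] [-> ->]. Qed.

Lemma uniq_swap (A B : eqType) (s : seq (A * B)) k :
  uniq s /\ size s = k -> uniq (map (@swapc A B) s) /\ size (map (@swapc A B) s) = k.
Proof. by case=> us ss; rewrite map_inj_uniq ?size_map //; exact: swapc_inj. Qed.

Local Open Scope classical_set_scope.
Local Open Scope ring_scope.

Section Determ.
Variable R : realType.

Lemma sum_top2_gt (m : nat) (S : {set 'I_m}) (f : 'I_m -> R) (c : R) :
  (forall j, f j <= 1) -> 1 <= c ->
  c < sum_top 2 [seq f j | j <- enum S] ->
  exists j1 j2, [/\ j1 != j2, j1 \in S, j2 \in S & c < f j1 + f j2].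
Proof.
move=> f1 c1; rewrite /sum_top sort_map -map_take big_map.
have : uniq (sort (relpre f (fun a b : R => b <= a)) (enum S)) by rewrite sort_uniq enum_uniq.
have : forall j, j \in sort (relpre f (fun a b : R => b <= a)) (enum S) -> j \in S.
  by move=> j; rewrite mem_sort mem_enum.
case: (sort _ _) => [|j1 [|j2 s]] Hin Hu /=.
- rewrite big_nil => /(le_lt_trans (le_trans ler01 c1)); by rewrite ltxx.
- rewrite big_cons big_nil addr0 => /(le_lt_trans (le_trans (f1 j1) c1)); by rewrite ltxx.
- rewrite take0 big_cons big_cons big_nil addr0 => H.
  exists j1, j2; split => //.
  + by move: Hu => /= /andP[]; rewrite inE negb_or => /andP[].
  + by apply: Hin; rewrite inE eqxx.
  + by apply: Hin; rewrite !inE eqxx orbT.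
Qed.


Lemma aux_lt (t x : R) : t < 1 -> t <= x -> 2 * t - 1 < x.
Proof. lra. Qed.

Section Inv.
Variables (n m : nat) (tau : R) (u : 'I_n -> 'I_m -> R).
Hypothesis u1 : forall i j, u i j <= 1.
Hypothesis tau12 : 1 <= 2 * tau.
Hypothesis tau1 : tau < 1.

Definition witness (i : 'I_n) (j : 'I_m) :=
  exists a y, [/\ a != i, y != j, 2 * tau - 1 < u a j, 2 * tau - 1 < u a y
    & 2 * tau - 1 < u i y].

Definition Inv (i : 'I_n) (S : {set 'I_m}) :=
  S \subset finset (fun j => tau <= u i j) /\
  forall j, j \in finset (fun j => tau <= u i j) -> j \notin S -> witness i j.

Lemma step_inv i a S : a != i -> Inv i S -> Inv i (removal_step 2 tau u a S).
Proof.
move=> ai [sub W]; rewrite /removal_step.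
case: ifP => // Hgt; split.
  by apply/fintype.subsetP => x; rewrite finset.in_setD => /andP[_ xS]; exact: (fintype.subsetP sub).
move=> j j0; rewrite finset.in_setD negb_and negbK => /orP[|jS]; last exact: W.
rewrite finset.in_set => /andP[jS /forall_inP jmax].
have [j1 [j2 [j12 j1S j2S H]]] := @sum_top2_gt _ S (u a) _ (u1 a) tau12 Hgt.
have h1 : 2 * tau - 1 < u a j1.
  by have := u1 a j2; lra.
have h2 : 2 * tau - 1 < u a j2.
  by have := u1 a j1; lra.
have hS y : y \in S -> 2 * tau - 1 < u i y.
  move=> yS; move/fintype.subsetP: sub => /(_ y yS); rewrite finset.in_set => ty.
  exact: aux_lt.
exists a.
case: (eqVneq j1 j) => [e1|n1].
- exists j2; split => //.
  + by rewrite -e1 eq_sym.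
  + by apply: lt_le_trans h2 (jmax _ j2S).
  + exact: hS.
- exists j1; split => //.
  + by apply: lt_le_trans h1 (jmax _ j1S).
  + exact: hS.
Qed.


Lemma iter_inv i a S k : a != i -> Inv i S -> Inv i (iter k (removal_step 2 tau u a) S).
Proof. by move=> ai H; elim: k => //= k IH; apply: step_inv. Qed.

Lemma fold_inv i (s : seq 'I_n) S : all (fun a => a != i) s -> Inv i S ->
  Inv i (foldl (fun S i' => removal_loop 2 tau u i' S) S s).
Proof.
elim: s S => //= a s IH S /andP[ai als] H.
by apply: IH => //; apply: iter_inv.
Qed.

Lemma residual_witness i j : E_ge tau u i j -> ~~ E_star 2 tau u i j -> witness i j.
Proof.
move=> ge nst.
have : Inv i (Mstar 2 tau u i).
  apply: fold_inv; first by apply/allP => a; rewrite mem_filter => /andP[].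
  split; first exact: subxx.
  by move=> j' ->.
by case=> _; apply => //; rewrite finset.in_set.
Qed.

End Inv.

End Determ.

Section Prob.
Variables (d : measure_display) (Omega : measurableType d) (R : realType)
  (P : probability Omega R) (C : finType) (X : C -> {RV P >-> R}).
Hypothesis indep : mutually_independent X.
Variables (t q0 : R).
Hypothesis q0ge0 : 0 <= q0.
Hypothesis hq : forall c, (P [set w | (t < X c w)%R] <= q0%:E)%E.

Lemma meas_gt c : measurable [set w | t < X c w].
Proof.
have -> : [set w | t < X c w] = X c @^-1` `]t, +oo[.
  by apply/seteqP; split => w /=; rewrite in_itv /= andbT.
apply: measurable_funPTI. exact: measurable_itv.
Qed.

Lemma all_meas (s : seq C) : measurable [set w | all (fun c => t < X c w) s].
Proof.
elim: s => [|c s IH] /=; first by rewrite (_ : [set w | true] = setT) //; apply/seteqP; split.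
have -> : [set w | (t < X c w) && all (fun c => t < X c w) s] =
  [set w | t < X c w] `&` [set w | all (fun c => t < X c w) s].
  by apply/seteqP; split => w /= => [/andP[]|[-> ->]].
exact: measurableI (meas_gt c) IH.
Qed.


Lemma all_prob (s : seq C) : uniq s ->
  (P [set w | all (fun c => (t < X c w)%R) s] <= (q0 ^+ size s)%:E)%E.
Proof.
move=> us.
pose B k : set R := if k \in s then `]t, +oo[%classic else setT.
have mB k : measurable (B k).
  by rewrite /B; case: ifP => _; [exact: measurable_itv | exact: measurableT].
have -> : [set w | all (fun c => (t < X c w)%R) s] =
    \bigcap_(k in [set: C]) (X k @^-1` B k).
  apply/seteqP; split => w /=.
  - move=> /allP H k _; rewrite /B; case: ifP => // ks /=.
    by rewrite in_itv /= andbT; exact: H.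
  - move=> H; apply/allP => k ks; have := H k I.
    by rewrite /B ks /= in_itv /= andbT.
rewrite indep //.
have fk k : P (X k @^-1` B k) = (fine (P (X k @^-1` B k)))%:E.
  by rewrite fineK // fin_num_measure //; exact: measurable_funPTI.
rewrite (eq_bigr _ (fun k _ => fk k)) prodEFin lee_fin.
rewrite (_ : q0 ^+ size s = \prod_(k : C) (if k \in s then q0 else 1)).
  apply: ler_prod => k _; rewrite fine_ge0 ?measure_ge0 //=.
  rewrite /B; case: ifP => ks.
  - have fk' := fk k; rewrite /B ks in fk'; rewrite -lee_fin -fk'.
    have -> : X k @^-1` `]t, +oo[ = [set w | (t < X k w)%R].
      by apply/seteqP; split => w /=; rewrite in_itv /= andbT.
    exact: hq.
  - by rewrite preimage_setT probability_setT.

rewrite -big_mkcond /= prodr_const; congr (_ ^+ _); exact/esym/card_uniqP.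
Qed.


Lemma has_bound (T : finType) (ok : pred T) (cells : T -> seq C) k (ts : seq T) :
  (forall x, ok x -> uniq (cells x) /\ size (cells x) = k) ->
  measurable [set w | has (fun x => ok x && all (fun c => (t < X c w)%R) (cells x)) ts] /\
  (P [set w | has (fun x => ok x && all (fun c => (t < X c w)%R) (cells x)) ts]
     <= ((size ts)%:R * q0 ^+ k)%:E)%E.
Proof.
move=> Hc; elim: ts => [|x ts [IHm IHp]] /=.
  rewrite (_ : [set w | false] = set0); last by apply/seteqP; split.
  by rewrite measure0 mul0r; split.
have -> : [set w | ok x && all (fun c => (t < X c w)%R) (cells x) ||
     has (fun x => ok x && all (fun c => (t < X c w)%R) (cells x)) ts] =
  [set w | ok x && all (fun c => (t < X c w)%R) (cells x)] `|`
  [set w | has (fun x => ok x && all (fun c => (t < X c w)%R) (cells x)) ts].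
  by apply/seteqP; split => w /= => [/orP|[]->]; rewrite ?orbT.
have [m1 p1] : measurable [set w | ok x && all (fun c => (t < X c w)%R) (cells x)] /\
    (P [set w | ok x && all (fun c => (t < X c w)%R) (cells x)] <= (q0 ^+ k)%:E)%E.
  case: (boolP (ok x)) => okx /=.
  - have [u1 <-] := Hc x okx; split; [exact: all_meas | exact: all_prob].
  - rewrite (_ : [set w | false] = set0); last by apply/seteqP; split.
    by rewrite measure0 lee_fin; split => //; exact: exprn_ge0.
split; first exact: measurableU.
apply: (le_trans (measureU2 _ m1 IHm)).
rewrite -addn1 natrD mulrDl mul1r addrC EFinD.
exact: leeD.
Qed.

Lemma pat_bound (T : finType) (ok : pred T) (cells : T -> seq C) k :
  (forall x, ok x -> uniq (cells x) /\ size (cells x) = k) ->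
  measurable [set w | [exists x, ok x && all (fun c => (t < X c w)%R) (cells x)]] /\
  (P [set w | [exists x, ok x && all (fun c => (t < X c w)%R) (cells x)]]
     <= (#|T|%:R * q0 ^+ k)%:E)%E.
Proof.
move=> Hc.
have -> : [set w | [exists x, ok x && all (fun c => (t < X c w)%R) (cells x)]] =
   [set w | has (fun x => ok x && all (fun c => (t < X c w)%R) (cells x)) (enum T)].
  apply/seteqP; split => w /=.
  - by move=> /existsP[x H]; apply/hasP; exists x; rewrite ?mem_enum.
  - by move=> /hasP[x _ H]; apply/existsP; exists x.
by rewrite cardE; exact: has_bound.
Qed.

End Prob.

Lemma ln_le16 (R : realType) (x : R) : 0 < x -> ln x <= 16 * x `^ (16^-1).
Proof.
move=> x0; have := ln_sublinear (powR_gt0 (16^-1) x0); rewrite ln_powR => H.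
lra.
Qed.

Lemma pow16K (R : realType) (x : R) : 0 <= x -> (x `^ (16^-1)) ^+ 16 = x.
Proof.
move=> x0; rewrite -powR_mulrn ?powR_ge0 // -powRrM mulVf ?powRr1 //.
Qed.

Lemma term_bound (R : realType) (n a b k : nat) (Q M : R) : (0 < n)%N -> 0 <= Q <= M -> 1 <= M ->
  (b <= 4)%N -> (k <= 8)%N -> (a + b + 1 = k)%N ->
  (n ^ a * (2 * n) ^ b)%:R * (Q / n%:R) ^+ k <= 16 * M ^+ 8 / n%:R.
Proof.
move=> n0 /andP[Q0 QM] M1 b4 k8 abk.
have nR : 0 < n%:R :> R by rewrite ltr0n.
have -> : (n ^ a * (2 * n) ^ b)%:R * (Q / n%:R) ^+ k = 2 ^+ b * Q ^+ k / n%:R.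
  rewrite -abk natrM !natrX natrM expr_div_n exprMn.
  rewrite !exprD expr1.
  field; have nz : n%:R != 0 :> R by rewrite pnatr_eq0 -lt0n.
  by rewrite nz !expf_neq0.
rewrite ler_pM2r ?invr_gt0 //.
apply: ler_pM.
- exact: exprn_ge0.
- exact: exprn_ge0.
- rewrite (_ : 16 = 2 ^+ 4); last by rewrite -natrX.
  by apply: ler_weXn2l => //; rewrite ler1n.
- have M0 : 0 <= M by apply: le_trans M1.
  apply: (le_trans (y := M ^+ k)).
    by rewrite ler_pXn2r ?nnegrE // -abk addn1.
  exact: ler_weXn2l.
Qed.

Lemma asymp (R : realType) (thl K q eps : R) : 0 < thl -> 0 <= K -> 0 < eps ->
  exists N : nat, forall n : nat, (N <= n)%N ->
   [/\ (0 < n)%N, 64 * ln ((2 * n)%:R : R) / (thl * n%:R) <= 2 `^ (- q)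
     & 128 * (1 + K * ln ((2 * n)%:R : R)) ^+ 8 / n%:R <= eps].
Proof.
move=> thl0 K0 eps0.
set p := 2 `^ q.
have p0 : 0 < p by apply: powR_gt0; rewrite ltr0n.
set c1 := 2048 * p / thl.
set c2 := 256 * (1 + 16 * K) ^+ 8 / eps.
have c10 : 0 <= c1.
  apply: divr_ge0; last exact: ltW.
  by apply: mulr_ge0; [rewrite ler0n | exact: ltW].
have c20 : 0 <= c2.
  apply: divr_ge0; last exact: ltW.
  apply: mulr_ge0; first by rewrite ler0n.
  apply: exprn_ge0; apply: addr_ge0; first exact: ler01.
  by apply: mulr_ge0; first rewrite ler0n.
set W := c1 + c2.
have W0 : 0 <= W by apply: addr_ge0.
exists (Num.Def.trunc (W ^+ 2)).+1 => n Hn.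
have n0 : (0 < n)%N by apply: leq_trans Hn.
have Wn : W ^+ 2 < n%:R by rewrite -truncn_lt_nat; [exact: Hn | exact: exprn_ge0].
set x : R := (2 * n)%:R.
have xn : x = 2 * n%:R by rewrite /x natrM.
have n1 : 1 <= n%:R :> R by rewrite ler1n.
have x1 : 1 <= x by rewrite xn; lra.
have x0 : 0 < x by lra.
set y := x `^ (16^-1).
have y0 : 0 <= y by exact: powR_ge0.
have y16 : y ^+ 16 = x by exact: pow16K (ltW x0).
have y1 : 1 <= y by rewrite -(@expr_ge1 _ 16) ?y16.
set z := y ^+ 8.
have zy : y <= z by rewrite /z -[X in X <= _]expr1; apply: ler_weXn2l.
have z2 : z ^+ 2 = x by rewrite /z -exprM.
have z0 : 0 <= z by lra.
have Wz : W <= z.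
  rewrite -ler_sqr ?nnegrE ?z2; [lra | exact: W0 | exact: z0].
have L16 : ln x <= 16 * z.
  by apply: (le_trans (ln_le16 x0)); rewrite -/y; lra.
have L0 : 0 <= ln x by exact: ln_ge0.
have nz : n%:R = z ^+ 2 / 2 by rewrite z2 xn; field.
have zc1 : 2048 * p <= thl * z.
  rewrite [thl * z]mulrC -ler_pdivrMr; last exact: thl0.
  by apply: (le_trans _ Wz); rewrite /W lerDl.
have zc2 : 256 * (1 + 16 * K) ^+ 8 <= eps * z.
  rewrite [eps * z]mulrC -ler_pdivrMr; last exact: eps0.
  by apply: (le_trans _ Wz); rewrite /W lerDr.
have z1 : 1 <= z by lra.
have pn0 : p != 0 by apply: lt0r_neq0.
have nR : 0 < n%:R :> R by rewrite ltr0n.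
split; first exact: n0.
- rewrite powRN -/p ler_pdivrMr; last exact: mulr_gt0.
  rewrite nz.
  have key : 1024 * z <= p^-1 * (thl * (z ^+ 2 / 2)).
    have -> : p^-1 * (thl * (z ^+ 2 / 2)) = (thl * z) * (z / (2 * p)).
      by rewrite expr2; field.
    have -> : 1024 * z = (2048 * p) * (z / (2 * p)) by field.
    apply: ler_wpM2r; last exact: zc1.
    apply: divr_ge0; first exact: z0.
    by apply: mulr_ge0; [rewrite ler0n | exact: ltW].
  lra.
- have KL : K * ln x <= K * (16 * y).
    by apply: ler_wpM2l; [exact: K0 | exact: ln_le16].
  have h1 : 1 + K * ln x <= (1 + 16 * K) * y.
    have : K * (16 * y) = 16 * K * y by rewrite mulrA [K * 16]mulrC.
    nra.
  have h2 : (1 + K * ln x) ^+ 8 <= (1 + 16 * K) ^+ 8 * z.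
    rewrite /z -exprMn ler_pXn2r ?nnegrE.
    + exact: h1.
    + by [].
    + by apply: addr_ge0; [exact: ler01 | apply: mulr_ge0].
    + apply: mulr_ge0; last exact: y0.
      by apply: addr_ge0; [exact: ler01 | apply: mulr_ge0; first rewrite ler0n].
  rewrite ler_pdivrMr; last exact: nR.
  rewrite nz.
  have key : 128 * ((1 + 16 * K) ^+ 8 * z) <= eps * (z ^+ 2 / 2).
    have -> : 128 * ((1 + 16 * K) ^+ 8 * z) = (256 * (1 + 16 * K) ^+ 8) * (z / 2).
      by field.
    have -> : eps * (z ^+ 2 / 2) = (eps * z) * (z / 2) by rewrite expr2; field.
    apply: ler_wpM2r; last exact: zc2.
    by apply: divr_ge0; [exact: z0 | rewrite ler0n].
  apply: le_trans key.
  by apply: ler_wpM2l; [rewrite ler0n | exact: h2].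
Qed.

Unset Implicit Arguments.
Unset Strict Implicit.
Local Open Scope classical_set_scope.
Local Open Scope ring_scope.

Theorem proposition5 (R : realType) (U : probability R R) (theta_lo theta_hi q : R) :
  0 < theta_lo -> 0 < theta_hi -> 0 < q ->
  U [set x : R | 0 <= x <= 1] = 1%E ->
  poly_bounded_below U theta_lo q ->
  poly_bounded_above U theta_hi q ->
  forall eps : R, 0 < eps ->
  exists N : nat, forall n : nat, (N <= n)%N ->
  forall (d : measure_display) (Omega : measurableType d)
         (P : probability Omega R)
         (X : 'I_n * 'I_(2 * n) -> {RV P >-> R}),
    (forall k B, measurable B -> distribution P (X k) B = U B) ->
    mutually_independent X ->
    exists A : set Omega,
      [/\ measurable A,
          A `<=` [set w | residual_max_degree_le 2
                   (tau_threshold theta_lo q n (2 * n))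
                   (fun i j => X (i, j) w) 2]
        & ((1 - eps)%:E <= P A)%E].
Proof.
move=> thl0 thh0 qpos U01 Hbel Hab eps eps0.
set K := theta_hi * 2 `^ q * 64 / theta_lo.
have K0 : 0 <= K.
  apply: divr_ge0; last exact: ltW.
  apply: mulr_ge0; last by rewrite ler0n.
  by apply: mulr_ge0; [exact: ltW | exact: powR_ge0].
have [N HN] := asymp q thl0 K0 eps0.
exists N => n Hn d Omega P X HX Hind.
have [n0 Hx Heps] := HN n Hn.
set L := ln ((2 * n)%:R : R).
have L0 : 0 < L by apply: ln_gt0; rewrite ltr1n; exact: leq_pmulr.
have nR : 0 < n%:R :> R by rewrite ltr0n.
set xx := 64 * L / (theta_lo * n%:R).
have xx0 : 0 < xx.
  apply: divr_gt0; last exact: mulr_gt0.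
  by apply: mulr_gt0; [rewrite ltr0n | exact: L0].
set a0 := xx `^ q^-1.
have a00 : 0 < a0 by apply: powR_gt0.
have a012 : a0 <= 2^-1.
  have -> : 2^-1 = (2 `^ (- q)) `^ q^-1 :> R.
    rewrite -powRrM mulNr mulfV ?gt_eqF // powR_inv1 //; by rewrite ler0n.
  apply: ge0_ler_powR; first by rewrite invr_ge0 ltW.
  - by rewrite nnegrE ltW.
  - by rewrite nnegrE powR_ge0.
  - exact: Hx.
have tauE : tau_threshold theta_lo q n (2 * n) = 1 - a0 by [].
rewrite tauE.
set tau := 1 - a0.
set q0 := K * L / n%:R.
have q0E : theta_hi * (2 * a0) `^ q = q0.
  rewrite powRM ?ler0n ?(ltW a00) // /a0 -powRrM mulVf ?gt_eqF // powRr1 ?(ltW xx0) //.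
  rewrite /q0 /K /xx; field.
  by rewrite !gt_eqF.
set tp := 2 * tau - 1.
have tpE : tp = 1 - 2 * a0 by rewrite /tp /tau; ring.
have mgt (r : R) : measurable [set u : R | r < u].
  have -> : [set u : R | r < u] = `]r, +oo[%classic.
    by apply/seteqP; split => u /=; rewrite in_itv /= andbT.
  exact: measurable_itv.
have hq c : (P [set w | (tp < X c w)%R] <= q0%:E)%E.
  have -> : [set w | (tp < X c w)%R] = X c @^-1` [set u | 1 - 2 * a0 < u].
    by rewrite tpE.
  rewrite -[P (X c @^-1` _)]/(distribution P (X c) _) HX; last exact: mgt.
  rewrite -q0E; apply: Hab; apply/andP; split; first by rewrite mulr_gt0 // ltr0n.
  by rewrite -ler_pdivlMl ?ltr0n // mulr1.
have hq1 c : (P [set w | (1 < X c w)%R] <= (0 : R)%:E)%E.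
  have -> : [set w | (1 < X c w)%R] = X c @^-1` [set u | 1 < u] by [].
  rewrite -[P (X c @^-1` _)]/(distribution P (X c) _) HX; last exact: mgt.
  have m01 : measurable [set x : R | 0 <= x <= 1].
    have -> : [set x : R | 0 <= x <= 1] = `[0, 1]%classic.
      by apply/seteqP; split => u /=; rewrite in_itv.
    exact: measurable_itv.
  apply: (@le_trans _ _ (U (~` [set x : R | 0 <= x <= 1]))).
    apply: le_measure; rewrite ?inE; [exact: mgt | exact: measurableC | ].
    by move=> u /= u1 /andP[_]; rewrite leNgt u1.
  by rewrite probability_setC // U01 subee.
have q0ge0 : 0 <= q0.
  by apply: divr_ge0; [apply: mulr_ge0; [exact: K0 | exact: ltW] | exact: ltW].
set M := 1 + K * L.
have M1 : 1 <= M by rewrite /M lerDl; apply: mulr_ge0; [exact: K0 | exact: ltW].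
have QM : 0 <= K * L <= M.
  by apply/andP; split; [apply: mulr_ge0; [exact: K0 | exact: ltW] | rewrite /M lerDr ler01].
set bnd := 16 * M ^+ 8 / n%:R.
have gen (T : finType) (ok : pred T) (cells : T -> seq ('I_n * 'I_(2 * n))) (k a b : nat) :
  (forall x, ok x -> uniq (cells x) /\ size (cells x) = k) ->
  #|T| = (n ^ a * (2 * n) ^ b)%N -> (b <= 4)%N -> (k <= 8)%N -> (a + b + 1 = k)%N ->
  exists S : set Omega, [/\ measurable S, (P S <= bnd%:E)%E &
    forall w, ~ S w -> ~~ [exists x, ok x && all (fun c => (tp < X c w)%R) (cells x)]].
  move=> Hc cT b4 k8 abk.
  have [mS pS] := pat_bound Hind q0ge0 hq Hc.
  eexists; split; [exact: mS | | by move=> w nS; apply/negP => H; apply: nS].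
  apply: (le_trans pS); rewrite lee_fin cT.
  exact: term_bound.
have [B0 [mB0 pB0 hB0]] : exists S : set Omega, [/\ measurable S, (P S <= (0:R)%:E)%E &
    forall w, ~ S w -> forall c, (X c w <= 1)%R].
  have [mS pS] := pat_bound Hind (lexx 0) hq1 (T := ('I_n * 'I_(2 * n))%type) (ok := predT)
    (cells := fun c => [:: c]) (k := 1) (fun c _ => conj erefl erefl).
  eexists; split; [exact: mS | | ].
    by apply: (le_trans pS); rewrite expr1 mulr0.
  move=> w nS c; rewrite leNgt; apply/negP => H; apply: nS.
  by apply/existsP; exists c; rewrite /= H.
have [RF [mRF pRF hRF]] := @gen _ _ _ 6 2 3 (@okF_uniq 'I_n 'I_(2 * n))
  ltac:(by rewrite !card_prod !card_ord; ring) isT isT erefl.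
have [RG1 [mRG1 pRG1 hRG1]] := @gen _ _ _ 6 3 2 (@okG1_uniq 'I_n 'I_(2 * n))
  ltac:(by rewrite !card_prod !card_ord; ring) isT isT erefl.
have [RG2 [mRG2 pRG2 hRG2]] := @gen _ _ _ 7 3 3 (@okG2_uniq 'I_n 'I_(2 * n))
  ltac:(by rewrite !card_prod !card_ord; ring) isT isT erefl.
have [RG3 [mRG3 pRG3 hRG3]] := @gen _ _ _ 8 3 4 (@okG3_uniq 'I_n 'I_(2 * n))
  ltac:(by rewrite !card_prod !card_ord; ring) isT isT erefl.
have [CF [mCF pCF hCF]] := @gen _ _ (fun t => map (@swapc _ _) (cellsF t)) 6 3 2
  (fun t ok => uniq_swap (@okF_uniq 'I_(2 * n) 'I_n t ok))
  ltac:(by rewrite !card_prod !card_ord; ring) isT isT erefl.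
have [CG1 [mCG1 pCG1 hCG1]] := @gen _ _ (fun t => map (@swapc _ _) (cellsG1 t)) 6 2 3
  (fun t ok => uniq_swap (@okG1_uniq 'I_(2 * n) 'I_n t ok))
  ltac:(by rewrite !card_prod !card_ord; ring) isT isT erefl.
have [CG2 [mCG2 pCG2 hCG2]] := @gen _ _ (fun t => map (@swapc _ _) (cellsG2 t)) 7 3 3
  (fun t ok => uniq_swap (@okG2_uniq 'I_(2 * n) 'I_n t ok))
  ltac:(by rewrite !card_prod !card_ord; ring) isT isT erefl.
have [CG3 [mCG3 pCG3 hCG3]] := @gen _ _ (fun t => map (@swapc _ _) (cellsG3 t)) 8 4 3
  (fun t ok => uniq_swap (@okG3_uniq 'I_(2 * n) 'I_n t ok))
  ltac:(by rewrite !card_prod !card_ord; ring) isT isT erefl.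
have U2 (S1 S2 : set Omega) (a b : R) : measurable S1 -> measurable S2 ->
    (P S1 <= a%:E)%E -> (P S2 <= b%:E)%E ->
    measurable (S1 `|` S2) /\ (P (S1 `|` S2) <= (a + b)%:E)%E.
  move=> m1 m2 p1 p2; split; first exact: measurableU.
  by apply: (le_trans (measureU2 _ m1 m2)); rewrite EFinD; apply: leeD.
have [m1 p1] := U2 _ _ _ _ mB0 mRF pB0 pRF.
have [m2 p2] := U2 _ _ _ _ m1 mRG1 p1 pRG1.
have [m3 p3] := U2 _ _ _ _ m2 mRG2 p2 pRG2.
have [m4 p4] := U2 _ _ _ _ m3 mRG3 p3 pRG3.
have [m5 p5] := U2 _ _ _ _ m4 mCF p4 pCF.
have [m6 p6] := U2 _ _ _ _ m5 mCG1 p5 pCG1.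
have [m7 p7] := U2 _ _ _ _ m6 mCG2 p6 pCG2.
have [m8 p8] := U2 _ _ _ _ m7 mCG3 p7 pCG3.
have tau12 : 1 <= 2 * tau by rewrite /tau; lra.
have tau1 : tau < 1 by rewrite /tau; lra.
have rowE (T : finType) (ok : pred T) (cells : T -> seq ('I_n * 'I_(2 * n))) w :
  pat_holds ok cells (fun i j => (tp < X (i, j) w)%R) =
  [exists x, ok x && all (fun c => (tp < X c w)%R) (cells x)].
  by apply: eq_existsb => x; congr (_ && _); apply: eq_all => -[].
have colE (T : finType) (ok : pred T) (cells : T -> seq ('I_(2 * n) * 'I_n)) w :
  pat_holds ok cells (fun j i => (tp < X (i, j) w)%R) =
  [exists x, ok x && all (fun c => (tp < X c w)%R) (map (@swapc _ _) (cells x))].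
  by apply: eq_existsb => x; rewrite all_map; congr (_ && _); apply: eq_all => -[].
eexists; split; first exact: measurableC m8.
  move=> w /= Hw.
  have nB0 : ~ B0 w by move=> H; apply: Hw; do 8!left.
  have nRF : ~ RF w by move=> H; apply: Hw; do 7!left; right.
  have nRG1 : ~ RG1 w by move=> H; apply: Hw; do 6!left; right.
  have nRG2 : ~ RG2 w by move=> H; apply: Hw; do 5!left; right.
  have nRG3 : ~ RG3 w by move=> H; apply: Hw; do 4!left; right.
  have nCF : ~ CF w by move=> H; apply: Hw; do 3!left; right.
  have nCG1 : ~ CG1 w by move=> H; apply: Hw; do 2!left; right.
  have nCG2 : ~ CG2 w by move=> H; apply: Hw; left; right.
  have nCG3 : ~ CG3 w by move=> H; apply: Hw; right.
  have u1 : forall (i : 'I_n) (j : 'I_(2 * n)), (fun i j => X (i, j) w) i j <= 1.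
    by move=> i j; exact: (hB0 w nB0 (i, j)).
  have nbr : no_bad (fun i j => (tp < X (i, j) w)%R).
    by rewrite /no_bad !rowE (hRF w nRF) (hRG1 w nRG1) (hRG2 w nRG2) (hRG3 w nRG3).
  have nbc : no_bad (fun (j : 'I_(2 * n)) (i : 'I_n) => (tp < X (i, j) w)%R).
    by rewrite /no_bad !colE (hCF w nCF) (hCG1 w nCG1) (hCG2 w nCG2) (hCG3 w nCG3).
  rewrite /residual_max_degree_le; apply/andP; split; apply/forallP => i.
  - apply: (comb nbr) => j /andP[ge nst].
    have [a [y [ai yj h1 h2 h3]]] := residual_witness u1 tau12 tau1 ge nst.
    exists a, y; apply/and5P; split; [exact: ai | exact: yj | exact: (aux_lt tau1 ge)
      | exact: h1 | apply/andP; split; [exact: h2 | exact: h3]].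
  - apply: (comb nbc) => j /andP[ge nst].
    have [a [y [ai yj h1 h2 h3]]] := residual_witness u1 tau12 tau1 ge nst.
    exists y, a; apply/and5P; split; [exact: yj | exact: ai | exact: (aux_lt tau1 ge)
      | exact: h3 | apply/andP; split; [exact: h2 | exact: h1]].
set Bad := (_ `|` CG3).
have fin : P Bad = (fine (P Bad))%:E by rewrite fineK // fin_num_measure.
rewrite probability_setC // fin -EFinB lee_fin.
rewrite fin lee_fin in p8.
have He : 128 * M ^+ 8 / n%:R <= eps := Heps.
have Hs : 0 + bnd + bnd + bnd + bnd + bnd + bnd + bnd + bnd = 128 * M ^+ 8 / n%:R.
  by rewrite /bnd; ring.
lra.
Qed.
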